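(* Let $K$ be a compact metric space, $f:K\to\mathbb{R}$ a function and $\alpha$ a countable ordinal. Then $v_\alpha(f)\le\mathrm{osc}_\alpha f\le v_\alpha(f)+v_\alpha(-f)$ pointwise on $K$.
   Context: For $g:K\to[-\infty,\infty]$, $Ug(x)=\limsup_{y\to x}g(y)=\inf_U\sup g(U)$ over open neighborhoods $U$ of $x$ (non-exclusive limsup). Transfinite oscillations: $\mathrm{osc}_0f\equiv0$; for $\beta=\alpha+1$, $\widetilde{\mathrm{osc}}_\beta f(x)=\limsup_{y\to x}(|f(y)-f(x)|+\mathrm{osc}_\alpha f(y))$; for limit $\beta$, $\widetilde{\mathrm{osc}}_\beta f=\sup_{\alpha<\beta}\mathrm{osc}_\alpha f$; $\mathrm{osc}_\beta f=U\widetilde{\mathrm{osc}}_\beta f$. Positive transfinite oscillations $v_\alpha(f)$ are defined identically but without absolute values: $v_0(f)\equiv0$; $\widetilde v_{\alpha+1}(f)(x)=\limsup_{y\to x}(f(y)-f(x)+v_\alpha(f)(y))$; $\widetilde v_\beta(f)=\sup_{\alpha<\beta}v_\alpha(f)$ for limit $\beta$; $v_\beta(f)=U\widetilde v_\beta(f)$. *)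

(* Defs.v *)
From HB Require Import structures.
From mathcomp Require Import all_boot all_order all_algebra.
From mathcomp Require Import all_classical all_reals all_analysis.
Set Implicit Arguments. Unset Strict Implicit. Unset Printing Implicit Defensive.
Import Order.TTheory GRing.Theory Num.Theory.
Local Open Scope classical_set_scope.
Local Open Scope ring_scope.
Local Open Scope ereal_scope.

Section TransOsc.
Context {R : realType} {K : metricType R}.

(* Non-exclusive upper limit / upper regularization:
   U h x = inf over open neighbourhoods U of x of sup h(U). *)
Definition ulimsup (h : K -> \bar R) (x : K) : \bar R :=
  ereal_inf [set ereal_sup (h @` U) | U in [set U : set K | open U /\ U x]].

(* Ordinals are represented by elements of a well-ordered type (W, lt):
   the ordinal of b is the order type of its initial segment {a | lt a b}. *)
Context {W : Type} (lt : W -> W -> Prop).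

Definition immpred (a b : W) : Prop := lt a b /\ ~ (exists c, lt a c /\ lt c b).

Definition trans_step (inc : K -> K -> R) (b : W)
    (rec : forall a, lt a b -> K -> \bar R) : K -> \bar R :=
  let tilde : K -> \bar R := fun x =>
    if `[< exists a, immpred a b >] then
      ereal_sup [set e | exists a (h : lt a b),
                   immpred a b /\
                   e = ulimsup (fun y => (inc x y)%:E + rec a h y) x]
    else
      ereal_sup [set e | exists a (h : lt a b), e = rec a h x] in
  fun x =>
    if `[< exists a, lt a b >] then ulimsup tilde x
    else 0 .

Definition trans_osc (wf : well_founded lt) (inc : K -> K -> R) : W -> K -> \bar R :=
  Fix wf (fun _ => K -> \bar R) (trans_step inc).

Definition osc (wf : well_founded lt) (f : K -> R) (b : W) : K -> \bar R :=
  trans_osc wf (fun x y => (`|f y - f x|)%R) b.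

Definition vosc (wf : well_founded lt) (f : K -> R) (b : W) : K -> \bar R :=
  trans_osc wf (fun x y => (f y - f x)%R) b.

End TransOsc.

(* Main.v *)
Require Import Defs.
From HB Require Import structures.
From mathcomp Require Import all_boot all_order all_algebra.
From mathcomp Require Import all_classical all_reals all_analysis.
From mathcomp Require Import ring lra.
Import Order.TTheory GRing.Theory Num.Theory.
Local Open Scope classical_set_scope.
Local Open Scope ring_scope.
Local Open Scope ereal_scope.

Section U.
Context {R : realType} {K : metricType R}.
Implicit Types (g h k : K -> \bar R) (x : K).

Lemma sup_le h (V : set K) t : (forall y, V y -> h y <= t) -> ereal_sup (h @` V) <= t.
Proof. by move=> H; apply/ereal_supP => _ [y Vy <-]; exact: H. Qed.

Lemma le_sup h (V : set K) y : V y -> h y <= ereal_sup (h @` V).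
Proof. by move=> Vy; apply: ereal_sup_ubound; exists y. Qed.

Arguments le_sup h {V y}.
Lemma U_le_sup h x (V : set K) : open V -> V x -> ulimsup h x <= ereal_sup (h @` V).
Proof. by move=> oV Vx; apply: ge_ereal_inf; exists (ereal_sup (h @` V)) => //; exists V. Qed.

Arguments U_le_sup h {x V}.
Lemma U_ge h x : h x <= ulimsup h x.
Proof. by apply/ereal_infP => _ [V [oV Vx] <-]; exact: le_sup. Qed.

Lemma U_lt h x t : ulimsup h x < t -> exists V, [/\ open V, V x & ereal_sup (h @` V) < t].
Proof. by move/ereal_inf_lt => [_ [V [oV Vx] <-] lt]; exists V. Qed.

Arguments U_lt {h x t}.
Lemma U_mono g h x : (forall y, g y <= h y) -> ulimsup g x <= ulimsup h x.
Proof.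
move=> H; apply/ereal_infP => _ [V [oV Vx] <-].
apply: (le_trans (U_le_sup g oV Vx)); apply: sup_le => y Vy.
exact: le_trans (H y) (le_sup h Vy).
Qed.

Lemma U_idem g x : ulimsup (ulimsup g) x <= ulimsup g x.
Proof.
apply/ereal_infP => _ [V [oV Vx] <-].
apply: le_trans (U_le_sup _ oV Vx) _; apply: sup_le => y Vy; exact: U_le_sup.
Qed.

Lemma U_const0 x : ulimsup (fun=> 0) x <= 0.
Proof. apply: le_trans (U_le_sup _ openT I) _ ; exact: sup_le. Qed.

Lemma approx (a c : \bar R) : -oo < a -> (forall t : R, a < t%:E -> c <= t%:E) -> c <= a.
Proof.
case: a => [r| |] // _ H; last by rewrite leey.
apply/lee_addgt0Pr => e e0; rewrite -EFinD; apply: H; by rewrite lte_fin ltrDl.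
Qed.

Lemma U_max k g h x : (forall y, -oo < g y) ->
  (forall y, k y <= maxe (g y) (h y)) -> ulimsup k x <= maxe (ulimsup g x) (ulimsup h x).
Proof.
move=> gf H; apply: approx.
  by rewrite lt_max (lt_le_trans (gf x) (U_ge g x)).
move=> t; rewrite gt_max => /andP[lt1 lt2].
have [V1 [op1 x1 s1]] := U_lt lt1; have [V2 [op2 x2 s2]] := U_lt lt2.
apply: le_trans (U_le_sup k (openI op1 op2) (conj x1 x2)) _.
apply: sup_le => y [y1 y2]; apply: le_trans (H y) _.
rewrite ge_max; apply/andP; split.
- by apply: le_trans (le_sup g y1) _; exact: ltW.
- by apply: le_trans (le_sup h y2) _; exact: ltW.
Qed.

Lemma U_add k g h x : (forall y, -oo < g y) -> (forall y, -oo < h y) ->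
  (forall y, k y <= g y + h y) -> ulimsup k x <= ulimsup g x + ulimsup h x.
Proof.
move=> gf hf H.
have ga := lt_le_trans (gf x) (U_ge g x).
have hb := lt_le_trans (hf x) (U_ge h x).
have Hg := @U_lt g x; have Hh := @U_lt h x.
move: ga hb Hg Hh; case: (ulimsup g x) => [a| |] //= _;
  case: (ulimsup h x) => [b| |] //= _ Hg Hh; try by rewrite leey.
apply: approx; first by rewrite -EFinD ltNyr.
move=> t abt.
have e0 : (0 < (t - (a + b)) / 2)%R by rewrite lte_fin in abt; lra.
set e := ((t - (a + b)) / 2)%R in e0.
have h1 : a%:E < (a + e)%:E by rewrite lte_fin ltrDl.
have [V1 [op1 x1 s1]] := Hg _ h1.
have h2 : b%:E < (b + e)%:E by rewrite lte_fin ltrDl.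
have [V2 [op2 x2 s2]] := Hh _ h2.
apply: le_trans (U_le_sup k (openI op1 op2) (conj x1 x2)) _.
apply: sup_le => y [y1 y2]; apply: le_trans (H y) _.
have -> : t = ((a + e) + (b + e))%R by rewrite /e; field.
rewrite EFinD; apply: leeD.
- by apply: le_trans (le_sup g y1) _; exact: ltW.
- by apply: le_trans (le_sup h y2) _; exact: ltW.
Qed.

End U.

Section K.
Context {R : realType} {K : metricType R}.

Lemma K_lemma (d d' : K -> R) (v w : K -> \bar R) x :
  d x = 0%R -> (forall z, d' z = (- d z)%R) -> (forall z, 0 <= v z) -> (forall z, 0 <= w z) ->
  ulimsup v x <= v x -> ulimsup w x <= w x ->
  ulimsup (fun z => (`|d z|)%:E + (v z + w z)) x <=
  ulimsup (fun z => (d z)%:E + v z) x + ulimsup (fun z => (d' z)%:E + w z) x.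
Proof.
move=> dx Hd' v0 w0 Uv Uw.
have fin : forall (r : R) u, 0 <= u -> -oo < r%:E + u.
  by move=> r u u0; apply: lt_le_trans (ltNyr r) (leeDl _ u0).
apply: le_trans (U_max _ (fun z => ((d z)%:E + v z) + w z)
   (fun z => ((d' z)%:E + w z) + v z) x _ _) _.
- by move=> z; rewrite -addeA; apply: fin; exact: adde_ge0.
- move=> z; rewrite Hd'; case: (lerP 0 (d z)) => dz.
    by rewrite ger0_norm // le_max addeA lexx.
  by rewrite ltr0_norm // le_max; apply/orP; right; rewrite -addeA (addeC (w z)).
rewrite ge_max; apply/andP; split.
- apply: le_trans (U_add _ (fun z => (d z)%:E + v z) w x _ _ (fun z => lexx _)) _.
  + by move=> z; exact: fin.
  + by move=> z; exact: lt_le_trans (ltNyr 0%R) (w0 z).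
  apply: leeD; first exact: lexx.
  apply: le_trans Uw _; apply: le_trans _ (U_ge _ x).
  by rewrite Hd' dx oppr0 add0e.
- apply: le_trans (U_add _ (fun z => (d' z)%:E + w z) v x _ _ (fun z => lexx _)) _.
  + by move=> z; exact: fin.
  + by move=> z; exact: lt_le_trans (ltNyr 0%R) (v0 z).
  rewrite addeC; apply: leeD; last exact: lexx.
  apply: le_trans Uv _; apply: le_trans _ (U_ge _ x).
  by rewrite dx add0e.
Qed.

End K.

Section T.
Context {R : realType} {K : metricType R} {W : Type} (lt : W -> W -> Prop) (wf : well_founded lt).

Definition tld (inc : K -> K -> R) (b : W) (y : K) : \bar R :=
  if `[< exists a, immpred lt a b >] then
    ereal_sup [set e | exists a (h : lt a b), immpred lt a b /\
       e = ulimsup (fun z => (inc y z)%:E + trans_osc wf inc a z) y]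
  else ereal_sup [set e | exists a (h : lt a b), e = trans_osc wf inc a y].

Lemma T_eq (inc : K -> K -> R) b : trans_osc wf inc b =
  fun y => if `[< exists a, lt a b >] then ulimsup (tld inc b) y else 0.
Proof.
rewrite {1}/trans_osc Fix_eq; first by [].
move=> b' F G FG; congr trans_step.
apply: functional_extensionality_dep => a; apply: functional_extensionality_dep => p.
exact: FG.
Qed.

Lemma tld_ge0 (inc : K -> K -> R) b : (forall x, inc x x = 0%R) ->
  (forall a, lt a b -> forall y, 0 <= trans_osc wf inc a y) ->
  (exists a, lt a b) -> forall y, 0 <= tld inc b y.
Proof.
move=> inc0 IH [a0 ha0] y; rewrite /tld; case: asboolP => [[a [ha hna]] | _].
- apply: le_ereal_sup_tmp.
  exists (ulimsup (fun z => (inc y z)%:E + trans_osc wf inc a z) y); first by exists a, ha.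
  have := U_ge (fun z => (inc y z)%:E + trans_osc wf inc a z) y.
  apply: le_trans; rewrite /= inc0 add0e; exact: IH.
- apply: le_ereal_sup_tmp; exists (trans_osc wf inc a0 y); first by exists a0, ha0.
  exact: IH.
Qed.

Lemma T_ge0 (inc : K -> K -> R) : (forall x, inc x x = 0%R) -> forall b y, 0 <= trans_osc wf inc b y.
Proof.
move=> inc0 b; elim/(well_founded_induction wf): b => b IH y.
rewrite T_eq; case: asboolP => [hb|_]; last by [].
exact: le_trans (tld_ge0 _ _ inc0 IH hb y) (U_ge _ _).
Qed.

Lemma T_usc (inc : K -> K -> R) b y : ulimsup (trans_osc wf inc b) y <= trans_osc wf inc b y.
Proof. rewrite T_eq; case: asboolP => _; [exact: U_idem | exact: U_const0]. Qed.

End T.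

Lemma main_gen (R : realType) (K : metricType R)
  (W : Type) (lt : W -> W -> Prop) (wf : well_founded lt)
  (io iv iw : K -> K -> R) :
  (forall x y, io x y = `|iv x y|%R) -> (forall x y, iw x y = (- iv x y)%R) ->
  (forall x, iv x x = 0%R) -> forall b x,
  (trans_osc wf iv b x <= trans_osc wf io b x)%E /\
  (trans_osc wf io b x <= trans_osc wf iv b x + trans_osc wf iw b x)%E.
Proof.
move=> ioE iwE iv0.
have io0 : forall x, io x x = 0%R by move=> x; rewrite ioE iv0 normr0.
have iw0 : forall x, iw x x = 0%R by move=> x; rewrite iwE iv0 oppr0.
move=> b; elim/(well_founded_induction wf): b => b IH x.
rewrite !(T_eq _ wf _ b); case: asboolP => hb; last by rewrite adde0.
split.
- apply: U_mono => y; rewrite /tld; case: asboolP => _.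
  + apply/ereal_supP => _ [a [ha [hp ->]]]; apply: le_ereal_sup_tmp.
    exists (ulimsup (fun z => (io y z)%:E + trans_osc wf io a z) y); first by exists a, ha.
    apply: U_mono => z; apply: leeD; first by rewrite lee_fin ioE ler_norm.
    exact: (IH a ha z).1.
  + apply/ereal_supP => _ [a [ha ->]]; apply: le_ereal_sup_tmp.
    exists (trans_osc wf io a y); first by exists a, ha.
    exact: (IH a ha y).1.
- apply: (U_add (tld _ wf io b) (tld _ wf iv b) (tld _ wf iw b) x).
  + move=> y; apply: lt_le_trans (ltNyr 0%R) _.
    apply: (tld_ge0 _ _ _ _ iv0) => // a _; exact: T_ge0.
  + move=> y; apply: lt_le_trans (ltNyr 0%R) _.
    apply: (tld_ge0 _ _ _ _ iw0) => // a _; exact: T_ge0.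
  move=> y; rewrite /tld; case: asboolP => _.
  + apply/ereal_supP => _ [a [ha [hp ->]]].
    apply: le_trans (_ : _ <= ulimsup (fun z => (`|iv y z|)%:E +
        (trans_osc wf iv a z + trans_osc wf iw a z)) y) _.
      apply: U_mono => z; rewrite ioE; apply: leeD; first by [].
      exact: (IH a ha z).2.
    apply: le_trans (K_lemma (iv y) (iw y) (trans_osc wf iv a) (trans_osc wf iw a) y _ _ _ _ _ _) _.
    * by rewrite iv0.
    * by move=> z; rewrite iwE.
    * by move=> z; exact: T_ge0.
    * by move=> z; exact: T_ge0.
    * exact: T_usc.
    * exact: T_usc.
    apply: leeD; apply: le_ereal_sup_tmp.
    * by exists (ulimsup (fun z => (iv y z)%:E + trans_osc wf iv a z) y) => //; exists a, ha.
    * by exists (ulimsup (fun z => (iw y z)%:E + trans_osc wf iw a z) y) => //; exists a, ha.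
  + apply/ereal_supP => _ [a [ha ->]].
    apply: le_trans (IH a ha y).2 _.
    apply: leeD; apply: le_ereal_sup_tmp.
    * by exists (trans_osc wf iv a y) => //; exists a, ha.
    * by exists (trans_osc wf iw a y) => //; exists a, ha.
Qed.

Theorem proposition3p2 (R : realType) (K : metricType R)
  (hK : compact [set: K]) (f : K -> R)
  (W : Type) (lt : W -> W -> Prop) (wf : well_founded lt)
  (lt_trans : forall a b c, lt a b -> lt b c -> lt a c)
  (lt_total : forall a b, lt a b \/ a = b \/ lt b a)
  (W_countable : exists g : W -> nat, injective g)
  (alpha : W) :
  forall x : K,
    (vosc wf f alpha x <= osc wf f alpha x)%E /\
    (osc wf f alpha x <= vosc wf f alpha x + vosc wf (fun y => (- f y)%R) alpha x)%E.
Proof.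
move=> x; apply: (@main_gen R K W lt wf (fun x y => `|f y - f x|%R)
  (fun x y => (f y - f x)%R) (fun x y => (- f y - - f x)%R)).
- by [].
- by move=> ? ?; rewrite opprK opprB addrC.
- by move=> ?; rewrite subrr.
Qed.
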